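(* Let $(G,u,v,\alpha,\beta)$ be a Guvab with $\beta=1$. Then either $\{W_{2k}\}$ is eventually constant, or there exist constants $c_e,\lambda_e$ such that $\left|W_{2k}-\lim_{k\to\infty}W_{2k}\right|\sim c_e\cdot\lambda_e^{2k}$. Also, either $\{W_{2k+1}\}$ is eventually constant, or there exist constants $c_o,\lambda_o$ such that $\left|W_{2k+1}-\lim_{k\to\infty}W_{2k+1}\right|\sim c_o\cdot\lambda_o^{2k+1}$.
   Context: A Guvab is a tuple $(G,u,v,\alpha,\beta)$ where $G$ is a finite, connected, simple graph, $u,v\in V(G)$, and $\alpha,\beta\in[0,1]$ with $\alpha\le\beta$. A random walk on $G$ with starting vertex $w$ and laziness $\gamma$ is the Markov chain $R_0=w$ and, for $i\ge1$, $R_i=R_{i-1}$ with probability $\gamma$ and $R_i=t$ with probability $\frac{1-\gamma}{\deg(R_{i-1})}$ for each neighbor $t$ of $R_{i-1}$. $\mu_k$ is the distribution after $k$ steps of the walk from $u$ with laziness $\alpha$, $\nu_k$ that of the walk from $v$ with laziness $\beta$, and $W_k=W(\mu_k,\nu_k)$ is the Wasserstein ($L^1$ optimal transport) distance with respect to the graph distance. A sequence $\{S_i\}$ is eventually constant if there is $N$ with $S_k=S_N$ for all $k\ge N$; $a_k\sim b_k$ means $a_k/b_k\to1$. The limits $\lim_k W_{2k}$ and $\lim_k W_{2k+1}$ exist. *)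

(* Defs.v *)
From HB Require Import structures.
From mathcomp Require Import all_boot all_order all_algebra.
From mathcomp Require Import all_classical all_reals all_analysis.
Set Implicit Arguments. Unset Strict Implicit. Unset Printing Implicit Defensive.
Import Order.TTheory GRing.Theory Num.Theory.
Local Open Scope ring_scope.
Local Open Scope classical_set_scope.

Definition simple_graph (T : finType) (e : rel T) : Prop :=
  (forall x y, e x y = e y x) /\ (forall x, ~~ e x x).

Definition connected_graph (T : finType) (e : rel T) : Prop :=
  forall x y, connect e x y.

Definition walk_n (T : finType) (e : rel T) (n : nat) (x y : T) : bool :=
  [exists p : n.-tuple T, path e x p && (last x p == y)].

(* graph distance: least n with a walk of length n from x to y
   (searched among 0..#|T|-1, which suffices in a connected graph) *)
Definition gdist (T : finType) (e : rel T) (x y : T) : nat :=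
  find (fun n => walk_n e n x y) (iota 0 #|T|).

Definition deg (T : finType) (e : rel T) (x : T) : nat := #|[set y | e x y]|.

Definition trans (R : realType) (T : finType) (e : rel T) (g : R) (x y : T) : R :=
  if x == y then g else if e x y then (1 - g) / (deg e x)%:R else 0.

Fixpoint walk_dist (R : realType) (T : finType) (e : rel T) (g : R) (w : T)
    (k : nat) : T -> R :=
  match k with
  | 0 => fun y => if y == w then 1 else 0
  | k'.+1 => fun y => \sum_(x : T) walk_dist e g w k' x * trans e g x y
  end.

Definition coupling (R : realType) (T : finType) (mu nu : T -> R)
    (pi : T -> T -> R) : Prop :=
  (forall x y, 0 <= pi x y) /\
  (forall x, \sum_(y : T) pi x y = mu x) /\
  (forall y, \sum_(x : T) pi x y = nu y).

Definition wasserstein (R : realType) (T : finType) (e : rel T)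
    (mu nu : T -> R) : R :=
  inf [set c : R | exists pi, coupling mu nu pi /\
        c = \sum_(x : T) \sum_(y : T) pi x y * (gdist e x y)%:R].

Definition Wk (R : realType) (T : finType) (e : rel T) (u v : T) (a b : R)
    (k : nat) : R :=
  wasserstein e (walk_dist e a u k) (walk_dist e b v k).

(* Main.v *)
Require Import Defs.
From HB Require Import structures.
From mathcomp Require Import all_boot all_order all_algebra.
From mathcomp Require Import all_classical all_reals all_analysis.
From mathcomp Require Import ring lra complex.
Import Order.TTheory GRing.Theory Num.Theory numFieldNormedType.Exports.
Local Open Scope ring_scope.
Local Open Scope classical_set_scope.

Set Implicit Arguments. Unset Strict Implicit. Unset Printing Implicit Defensive.

Section Asym.
Variable R : realType.

Definition xsum (s : seq (R * R)) (k : nat) : R := \sum_(p <- s) p.1 * p.2 ^+ k.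

Lemma uniq_map_inj (A B : eqType) (f : A -> B) (s : seq A) x y :
  uniq (map f s) -> x \in s -> y \in s -> f x = f y -> x = y.
Proof.
elim: s => [//|a s IH] /= /andP[ha hu].
rewrite !inE => /orP[/eqP->|hx] /orP[/eqP->|hy] //.
- by move=> hf; move: ha; rewrite hf map_f.
- by move=> hf; move: ha; rewrite -hf map_f.
- exact: IH.
Qed.

Lemma normalize (s : seq (R * R)) : all (fun p => 0 <= p.2) s ->
  exists s', [/\ uniq (map snd s'), all (fun p => p.1 != 0) s',
     all (fun p => 0 <= p.2) s' & forall k, xsum s' k = xsum s k].
Proof.
elim: s => [|p s0 IH]; first by move=> _; exists [::].
rewrite /= => /andP[hp /IH [s0' [hu hnz hpos hs]]].
set D := p.1 + \sum_(q <- s0' | q.2 == p.2) q.1.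
set F := [seq q <- s0' | q.2 != p.2].
have huF : uniq (map snd F).
  apply: subseq_uniq hu; apply: map_subseq; exact: filter_subseq.
have hnF : p.2 \notin map snd F.
  apply/mapP => -[q]; rewrite mem_filter => /andP[/eqP h _] e; exact: h.
have hnzF : all (fun p => p.1 != 0) F by rewrite all_filter; apply/allP => q hq; apply/implyP => _; exact: (allP hnz).
have hposF : all (fun p => 0 <= p.2) F by rewrite all_filter; apply/allP => q hq; apply/implyP => _; exact: (allP hpos).
have key : forall k, xsum s0 k = (\sum_(q <- s0' | q.2 == p.2) q.1) * p.2 ^+ k + xsum F k.
  move=> k; rewrite -hs /xsum (bigID (fun q => q.2 == p.2)) /= big_filter.
  congr (_ + _); rewrite mulr_suml; apply: eq_bigr => q /eqP -> //.
exists ((if D == 0 then [::] else [:: (D, p.2)]) ++ F).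
case: eqP => hD /=.
- split => // k; rewrite /xsum big_cons -/(xsum s0 k) key.
  rewrite -/(xsum F k) addrA -mulrDl -/D hD mul0r add0r //.
- split.
  + by rewrite /= hnF huF.
  + by rewrite /= hnzF andbT; apply/eqP.
  + by rewrite /= hposF andbT.
  + move=> k; rewrite /xsum !big_cons -/(xsum s0 k) -/(xsum F k) key.
    by rewrite addrA -mulrDl.
Qed.

Lemma exists_max (Q : seq (R * R)) : Q != [::] ->
  exists2 q, q \in Q & forall p, p \in Q -> p.2 <= q.2.
Proof.
elim: Q => [//|a Q IH] _.
case: (eqVneq Q [::]) => [->|hQ].
  by exists a; rewrite ?inE // => p; rewrite inE => /eqP->.
have [q hq hm] := IH hQ.
case: (leP a.2 q.2) => h.
  exists q; first by rewrite inE hq orbT.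
  by move=> p; rewrite inE => /orP[/eqP->|/hm].
exists a; first by rewrite inE eqxx.
move=> p; rewrite inE => /orP[/eqP->//|/hm hp]; exact: (le_trans hp (ltW h)).
Qed.

Lemma cvg_sum0 (I : eqType) (r : seq I) (P : pred I) (f : I -> nat -> R) :
  (forall i, i \in r -> P i -> f i n @[n --> \oo] --> 0) ->
  (\sum_(i <- r | P i) f i n) @[n --> \oo] --> 0.
Proof.
elim: r => [|a r IH] h.
  under eq_fun do rewrite big_nil; exact: cvg_cst.
have IH' := IH (fun i hi => h i (@mem_behead _ (a :: r) i hi)).
case: (boolP (P a)) => hPa.
  under eq_fun do rewrite big_cons hPa.
  have := cvgD (h a (mem_head _ _) hPa) IH'; rewrite addr0; exact.
under eq_fun do rewrite big_cons (negbTE hPa).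
exact: IH'.
Qed.


Lemma asym_normal (t : nat -> R) (s : seq (R * R)) (B : R) :
  uniq (map snd s) -> all (fun p => p.1 != 0) s -> all (fun p => 0 <= p.2) s ->
  (forall k, t k = xsum s k) -> (forall k, `|t k| <= B) ->
  (exists N : nat, forall k, (N <= k)%N -> t k = t N) \/
  (exists C m : R, 0 < m /\
     (fun k : nat => `|t k - limn t| / (C * m ^+ k)) @ \oo --> (1 : R)).
Proof.
move=> hu hnz hpos ht hB.
set c1 := \sum_(p <- s | p.2 == 1) p.1.
set Q := [seq p <- s | (p.2 != 0) && (p.2 != 1)].
have tQ : forall k, (0 < k)%N -> t k = c1 + \sum_(p <- Q) p.1 * p.2 ^+ k.
  move=> k hk; rewrite ht /xsum (bigID (fun p => p.2 == 1)) /=.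
  congr (_ + _).
    by rewrite /c1; apply: eq_big => [p|p]; rewrite ?andTb // => /eqP ->; rewrite expr1n mulr1.
  rewrite (bigID (fun p => p.2 == 0)) /= big1 ?add0r.
    by rewrite big_filter; apply: eq_bigl => p; rewrite andbC.
  move=> p /andP[_ /eqP ->]; rewrite expr0n; case: k hk => // k' _; rewrite /= mulr0.
1: by []. case: (eqVneq Q [::]) => hQ.
  by left; exists 1%N => k hk; rewrite (tQ k hk) (tQ 1%N isT) hQ !big_nil.
have [q hqQ hqmax] := exists_max hQ.
have hqs : q \in s by move: hqQ; rewrite mem_filter => /andP[].
have [hq0 hq1] : q.2 != 0 /\ q.2 != 1 by move: hqQ; rewrite mem_filter => /andP[/andP[]].
set m := q.2; set c := q.1.
have hm0 : 0 < m by rewrite lt_def hq0 (allP hpos q hqs).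
have hc0 : c != 0 := allP hnz q hqs.
have hlt : forall p, p \in Q -> p != q -> p.2 < m.
  move=> p hp hpq; rewrite lt_def hqmax // andbT.
  apply: contra hpq => /eqP h; apply/eqP.
  have hps : p \in s by move: hp; rewrite mem_filter => /andP[].
  by apply/esym; exact: (@uniq_map_inj _ _ (fun i => i.2) s q p hu hqs hps h).
have hQu : uniq Q by apply: filter_uniq; exact: (map_uniq hu).
pose r k := \sum_(p <- Q | p != q) (p.1 / c) * (p.2 / m) ^+ k.
have hr : r k @[k --> \oo] --> 0.
  apply: cvg_sum0 => p hp hpq.
  have hp0 : 0 <= p.2 by apply: (allP hpos); move: hp; rewrite mem_filter => /andP[].
  have := cvgM (cvg_cst (p.1 / c)) (@cvg_expr _ (p.2 / m) _).
  rewrite mulr0; apply.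
  rewrite ger0_norm ?divr_ge0 ?(ltW hm0) //.
  by rewrite ltr_pdivrMr // mul1r; exact: hlt.
have key : forall k, (0 < k)%N -> t k - c1 = c * m ^+ k * (1 + r k).
  move=> k hk; rewrite tQ // addrC addKr (bigD1_seq q) //=.
  rewrite mulrDr mulr1 /r mulr_sumr; congr (_ + _).
  apply: eq_bigr => p _; rewrite expr_div_n.
  have hmk : m ^+ k != 0 by rewrite expf_neq0 // gt_eqF.
  by field; rewrite hc0 hmk.
have ev : \forall k \near \oo, (0 < k)%N by exact: nbhs_infty_gt.
case: (ltgtP m 1) => hm1; last by move: hq1; rewrite -/m hm1 eqxx.
-
  have htl : t k @[k --> \oo] --> c1.
    have h1 : (c1 + c * m ^+ k * (1 + r k)) @[k --> \oo] --> c1 + c * 0 * (1 + 0).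
      apply: cvgD; first exact: cvg_cst.
      apply: cvgM; last by apply: cvgD => //; exact: cvg_cst.
      apply: cvgM; first exact: cvg_cst.
      by apply: cvg_expr; rewrite ger0_norm ?(ltW hm0).
    rewrite mulr0 mul0r addr0 in h1.
    apply: cvg_trans h1; apply: near_eq_cvg; near=> k.
    by rewrite -key; [rewrite addrC subrK | near: k].
  have hL : limn t = c1 by apply: cvg_lim.
  right; exists `|c|, m; split => //.
  have h1 : (fun k => `|1 + r k|) @ \oo --> (`|1 + 0| : R).
    by apply: cvg_norm; apply: cvgD => //; exact: cvg_cst.
  rewrite addr0 normr1 in h1.
  apply: cvg_trans h1; apply: near_eq_cvg; near=> k.
  rewrite hL key; last by near: k.
  rewrite !normrM (ger0_norm (exprn_ge0 _ (ltW hm0))) mulrAC.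
  rewrite mulfV ?mul1r // mulf_neq0 ?normr_eq0 // expf_neq0 // gt_eqF //.
-
  exfalso.
  pose g k := (t k - c1) * (m^-1) ^+ k.
  have hg : g k @[k --> \oo] --> c * (1 + 0).
    have h1 : (c * (1 + r k)) @[k --> \oo] --> c * (1 + 0).
      by apply: cvgM; [exact: cvg_cst | apply: cvgD => //; exact: cvg_cst].
    apply: cvg_trans h1; apply: near_eq_cvg; near=> k.
    rewrite /g key; last by near: k.
    have hmk : m ^+ k != 0 by rewrite expf_neq0 // gt_eqF.
    by rewrite exprVn; field.
  rewrite addr0 mulr1 in hg.
  have hmi : `|m^-1| < 1 by rewrite ger0_norm ?invr_ge0 ?(ltW hm0) // invf_lt1.
  have hh : ((B + `|c1|) * (m^-1) ^+ k) @[k --> \oo] --> (B + `|c1|) * 0.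
    by apply: cvgM; [exact: cvg_cst | exact: cvg_expr].
  rewrite mulr0 in hh.
  have hgn : `|g k| @[k --> \oo] --> `|c| by exact: cvg_norm.
  have : `|c| <= 0.
    rewrite -(cvg_lim _ hgn) // -(cvg_lim _ hh) //.
    apply: ler_lim; [by apply/cvg_ex; eexists; exact: hgn
                    | by apply/cvg_ex; eexists; exact: hh | ].
    near=> k; rewrite /g normrM (ger0_norm (exprn_ge0 _ _)) ?invr_ge0 ?(ltW hm0) //.
    apply: ler_wpM2r; first by rewrite exprn_ge0 // invr_ge0 ltW.
    by apply: (le_trans (ler_normB _ _)); apply: lerD.
  by rewrite normr_le0 (negbTE hc0).
Unshelve. all: end_near.
Qed.

End Asym.

Lemma hin (T : finType) (e : rel T) x y : (y \in [set y0 | e x y0]) = e x y.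
Proof. apply/idP/idP; first by rewrite in_setE. by move=> h; rewrite in_setE. Qed.

Section Graph.
Variables (R : realType) (T : finType) (e : rel T).

Lemma trans1 (x y : T) : trans e (1 : R) x y = (x == y)%:R.
Proof. by rewrite /trans; case: eqP => // _; case: (e x y); rewrite ?subrr ?mul0r. Qed.

Lemma walk1 (v : T) k y : walk_dist e (1 : R) v k y = (y == v)%:R.
Proof.
elim: k y => [|k IH] y /=; first by case: eqP.
under eq_bigr do rewrite IH trans1.
rewrite (bigD1 v) //= big1 => [|x /negbTE ->]; last by rewrite mul0r.
by rewrite eqxx mul1r addr0 eq_sym.
Qed.

Definition wcost (mu : T -> R) (v : T) := \sum_(x : T) mu x * (gdist e x v)%:R.

Lemma wass_sub (mu : T -> R) (v : T) c :
  (exists pi, coupling mu (fun y => (y == v)%:R) pi /\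
        c = \sum_(x : T) \sum_(y : T) pi x y * (gdist e x y)%:R) ->
  c = wcost mu v.
Proof.
move=> [pi [[h0 [hr hc]] ->]].
have hz : forall x y, y != v -> pi x y = 0.
  move=> x y hy; have := hc y; rewrite (negbTE hy) => h.
  have h2 : \sum_(i : T) pi i y = 0 by rewrite h.
  by apply: (psumr_eq0P _ h2) => // i _; exact: h0.
rewrite /wcost; apply: eq_bigr => x _.
rewrite (bigD1 v) //= big1 ?addr0; last by move=> y hy; rewrite hz // mul0r.
congr (_ * _); rewrite -(hr x) (bigD1 v) //= big1 ?addr0 //.
by move=> y hy; rewrite hz.
Qed.

Lemma wass_eq (mu : T -> R) (v : T) :
  (forall x, 0 <= mu x) -> \sum_(x : T) mu x = 1 ->
  wasserstein e mu (fun y => (y == v)%:R) = wcost mu v.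
Proof.
move=> h0 h1; rewrite /wasserstein.
suff -> : [set c : R | exists pi, coupling mu (fun y => (y == v)%:R) pi /\
        c = \sum_(x : T) \sum_(y : T) pi x y * (gdist e x y)%:R] = [set wcost mu v].
  exact: inf1.
apply/seteqP; split => c /=; first exact: wass_sub.
move=> ->; exists (fun x y => mu x * (y == v)%:R); split; first split.
- by move=> x y; rewrite mulr_ge0.
- split => [x|y].
    by rewrite (bigD1 v) //= big1 ?eqxx ?mulr1 ?addr0 // => y /negbTE ->; rewrite mulr0.
  by rewrite -mulr_suml h1 mul1r.
- rewrite /wcost; apply: eq_bigr => x _.
  rewrite (bigD1 v) //= big1 ?eqxx ?mulr1 ?addr0 // => y /negbTE ->.
  by rewrite mulr0 mul0r.
Qed.

Lemma wass_cases (mu : T -> R) (v : T) :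
  wasserstein e mu (fun y => (y == v)%:R) = wcost mu v \/
  wasserstein e mu (fun y => (y == v)%:R) = 0.
Proof.
rewrite /wasserstein.
set S := [set c : R | _].
have : S `<=` [set wcost mu v] by move=> c /wass_sub.
case/subset_set1 => ->; [right; exact: inf0 | left; exact: inf1].
Qed.


Lemma deg0_single (x : T) : connected_graph e -> deg e x = 0%N -> forall y, y = x.
Proof.
move=> hc hd y; apply/eqP; apply/negPn/negP => hyx.
have /connectP [p hp hl] := hc x y.
case: p hp hl => [|z p] /=; first by move=> _ h; rewrite h eqxx in hyx.
move=> /andP[hxz _] _.
have hz : z \in [set y0 | e x y0] by rewrite inE.
have : (0 < deg e x)%N by apply/card_gt0P; exists z.
by rewrite hd.
Qed.

Lemma gdist_refl (x : T) : gdist e x x = 0%N.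
Proof.
rewrite /gdist; have hT : (0 < #|T|)%N by apply/card_gt0P; exists x.
case: #|T| hT => // n _ /=.
suff -> : walk_n e 0 x x by [].
by apply/existsP; exists [tuple]; rewrite /= eqxx.
Qed.

Lemma gdist_le (x y : T) : (gdist e x y <= #|T|)%N.
Proof. by rewrite /gdist (leq_trans (find_size _ _)) // size_iota. Qed.

Lemma trans_ge0 (g : R) x y : 0 <= g <= 1 -> 0 <= trans e g x y.
Proof.
move=> /andP[h0 h1]; rewrite /trans; case: eqP => // _; case: (e x y) => //.
by rewrite divr_ge0 // subr_ge0.
Qed.

Lemma trans_sum (g : R) x : simple_graph e -> (0 < deg e x)%N ->
  \sum_(y : T) trans e g x y = 1.
Proof.
move=> [_ hirr] hd; rewrite (bigD1 x) //= /trans eqxx.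
have -> : \sum_(y | y != x) (if x == y then g else if e x y then (1 - g) / (deg e x)%:R else 0)
   = \sum_(y in [set y | e x y]) (1 - g) / (deg e x)%:R.
  rewrite big_mkcond [RHS]big_mkcond; apply: eq_bigr => y _ /=.
  rewrite hin eq_sym; case: eqP => [->|_] /=; last by case: (e x y).
  by rewrite (negbTE (hirr y)).
have hd2 : (deg e x)%:R != 0 :> R by rewrite pnatr_eq0 -lt0n.
rewrite sumr_const -/(deg e x) -[X in _ + X]mulr_natr; by field.
Qed.

Lemma walk_ge0 (g : R) w k y : 0 <= g <= 1 -> 0 <= walk_dist e g w k y.
Proof.
move=> hg; elim: k y => [|k IH] y /=; first by case: eqP.
by apply: sumr_ge0 => x _; rewrite mulr_ge0 // trans_ge0.
Qed.

Lemma walk_sum (g : R) w k : simple_graph e -> (forall x, 0 < deg e x)%N ->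
  \sum_(y : T) walk_dist e g w k y = 1.
Proof.
move=> hs hd; elim: k => [|k IH] /=.
  by rewrite (bigD1 w) //= eqxx big1 ?addr0 // => y /negbTE ->.
rewrite exchange_big /= -IH; apply: eq_bigr => x _.
by rewrite -mulr_sumr trans_sum // mulr1.
Qed.

End Graph.

Lemma conj_pow (F : comUnitRingType) n (Q : 'M[F]_n) (d : 'rV[F]_n) :
  Q \in unitmx -> forall k,
  (invmx Q *m diag_mx d *m Q) ^+ k = invmx Q *m diag_mx (\row_l (d 0 l ^+ k)) *m Q.
Proof.
move=> hU; elim=> [|k IH].
  rewrite expr0.
  have -> : \row_l (d 0 l ^+ 0) = const_mx 1 by apply/matrixP => i j; rewrite !mxE.
  by rewrite diag_const_mx mulmx1 mulVmx.
rewrite exprSr -mulmxE IH.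
have E : Q *m (invmx Q *m diag_mx d *m Q) = diag_mx d *m Q.
  by rewrite !mulmxA mulmxV // mul1mx.
rewrite -[invmx Q *m _ *m Q *m _]mulmxA E !mulmxA -[invmx Q *m _ *m diag_mx d]mulmxA mulmx_diag.
congr (_ *m _ *m _); congr diag_mx; apply/matrixP => i j; rewrite !mxE.
by rewrite exprSr.
Qed.

Section Spec.
Local Open Scope complex_scope.
Variables (R : realType) (T : finType) (e : rel T) (alpha : R) (u v : T).
Hypothesis hs : simple_graph e.
Hypothesis hd : forall x, (0 < deg e x)%N.

Let pi x : R := (deg e x)%:R.
Let sq x : R := Num.sqrt (pi x).
Let ev (i : 'I_#|T|) : T := enum_val i.
Let iu : 'I_#|T| := enum_rank u.

Lemma pi_gt0 x : 0 < pi x. Proof. by rewrite /pi ltr0n. Qed.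
Lemma sq_gt0 x : 0 < sq x. Proof. by rewrite /sq sqrtr_gt0 pi_gt0. Qed.
Lemma sq_neq0 x : sq x != 0. Proof. by rewrite gt_eqF // sq_gt0. Qed.
Lemma sq2 x : sq x ^+ 2 = pi x. Proof. by rewrite /sq sqr_sqrtr // ltW // pi_gt0. Qed.

Lemma hrev x y : pi x * trans e alpha x y = pi y * trans e alpha y x.
Proof.
rewrite /trans; case: (eqVneq x y) => [->//|hxy].
rewrite (proj1 hs y x).
case: (e x y); last by rewrite !mulr0.
have := pi_gt0 x; have := pi_gt0 y; rewrite /pi => h1 h2.
by field; rewrite !gt_eqF.
Qed.

Lemma sumT (F : T -> R) : \sum_(x : T) F x = \sum_(i < #|T|) F (ev i).
Proof. by rewrite (reindex ev) //; apply: onW_bij; exact: enum_val_bij. Qed.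

Definition Smx : 'M[R]_#|T| :=
  \matrix_(i, j) (sq (ev i) * trans e alpha (ev i) (ev j) / sq (ev j)).

Lemma Smx_sym : Smx^T = Smx.
Proof.
apply/matrixP => i j; rewrite !mxE.
have hP : trans e alpha (ev j) (ev i) =
   sq (ev i) ^+ 2 * trans e alpha (ev i) (ev j) / sq (ev j) ^+ 2.
  by rewrite !sq2 hrev; field; rewrite pnatr_eq0 -lt0n hd.
rewrite hP; have := sq_neq0 (ev i); have := sq_neq0 (ev j) => h1 h2.
by field; rewrite ?sq_neq0.
Qed.

Lemma walk_S k j : walk_dist e alpha u k (ev j) = (Smx ^+ k) iu j * sq (ev j) / sq u.
Proof.
elim: k j => [|k IH] j /=.
  rewrite expr0 mxE.
  case: (eqVneq j iu) => [->|hj].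
    by rewrite /ev /iu enum_rankK eqxx mul1r mulfV // sq_neq0.
  rewrite mul0r mul0r.
  case: eqP => // h; case/negP: hj; apply/eqP.
  by rewrite /iu -h /ev enum_valK.
rewrite sumT exprSr -mulmxE mxE mulr_suml mulr_suml; apply: eq_bigr => i _.
rewrite IH mxE; have := sq_neq0 (ev j); have := sq_neq0 u => h1 h2.
by field; rewrite ?sq_neq0.
Qed.


Let b (j : 'I_#|T|) : R := sq (ev j) / sq u * (gdist e (ev j) v)%:R.

Lemma wcost_S k : wcost e (walk_dist e alpha u k) v = \sum_j (Smx ^+ k) iu j * b j.
Proof.
rewrite /wcost sumT; apply: eq_bigr => j _; rewrite walk_S /b.
by rewrite !mulrA.
Qed.

Definition Sc : 'M[R[i]]_#|T| := map_mx (real_complex R) Smx.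

Lemma map_exp k : map_mx (real_complex R) (Smx ^+ k) = Sc ^+ k.
Proof.
elim: k => [|k IH]; first by rewrite !expr0 map_mx1.
by rewrite !exprS -!mulmxE map_mxM IH.
Qed.

Lemma Sc_herm : Sc \is hermsymmx.
Proof.
apply: realsym_hermsym.
  apply/is_hermitianmxP; rewrite expr0 scale1r map_mx_id // /Sc.
  by rewrite map_trmx Smx_sym.
apply/mxOverP => i j; rewrite mxE.
by rewrite complex_real.
Qed.

Let Qm := spectralmx Sc.
Let sp := spectral_diag Sc.

Lemma Sc_pow k : Sc ^+ k = invmx Qm *m diag_mx (\row_l (sp 0 l ^+ k)) *m Qm.
Proof.
have hU : Qm \in unitmx by exact: spectral_unit.
have hS : Sc = invmx Qm *m diag_mx sp *m Qm.
  exact/orthomx_spectralP/hermitian_normalmx/Sc_herm.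
have := conj_pow sp hU k; rewrite -hS; exact.
Qed.

Lemma ReD (x y : R[i]) : complex.Re (x + y) = complex.Re x + complex.Re y.
Proof. by case: x; case: y. Qed.

Lemma ReS (I : Type) (r : seq I) (F : I -> R[i]) :
  complex.Re (\sum_(i <- r) F i) = \sum_(i <- r) complex.Re (F i).
Proof.
apply: (big_ind2 (fun a b => complex.Re a = b)) => //.
by move=> x1 x2 y1 y2 <- <-; rewrite ReD.
Qed.

Lemma ReM (c : R[i]) (x : R) : complex.Re (c * x%:C)%C = complex.Re c * x.
Proof. by case: c => a0 b0 /=; rewrite mulr0 subr0. Qed.

Lemma repr_walk : exists s : seq (R * R),
  forall k, wcost e (walk_dist e alpha u k) v = xsum s k.
Proof.
have hreal := hermitian_spectral_diag_real Sc_herm.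
pose lam l := complex.Re (sp 0 l).
have hlam : forall l, sp 0 l = (lam l)%:C.
  move=> l; rewrite /lam RRe_real //; exact: (mxOverP hreal 0 l).
pose cc l := \sum_j (invmx Qm) iu l * Qm l j * (b j)%:C.
exists [seq (complex.Re (cc l), lam l) | l <- index_enum 'I_#|T|] => k.
rewrite /xsum big_map wcost_S.
have -> : \sum_j (Smx ^+ k) iu j * b j = complex.Re ((\sum_j (Smx ^+ k) iu j * b j)%:C).
  by [].
rewrite rmorph_sum /=.
have -> : \sum_j ((Smx ^+ k) iu j * b j)%:C = \sum_j (Sc ^+ k) iu j * (b j)%:C.
  apply: eq_bigr => j _; rewrite rmorphM /=; congr (_ * _).
  by rewrite -map_exp mxE.
have E1 : forall j, (Sc ^+ k) iu j = \sum_l invmx Qm iu l * sp 0 l ^+ k * Qm l j.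
  by move=> j; rewrite Sc_pow mxE; apply: eq_bigr => l _; rewrite mul_mx_diag !mxE.
transitivity (complex.Re (\sum_l cc l * ((lam l)%:C) ^+ k)).
  congr complex.Re.
  under eq_bigr do rewrite E1 mulr_suml.
  rewrite exchange_big /=; apply: eq_bigr => l _; rewrite /cc mulr_suml.
  by apply: eq_bigr => j _; rewrite -hlam; ring.
rewrite ReS; apply: eq_bigr => l _; by rewrite -rmorphXn ReM.
Qed.

End Spec.

Lemma parity (R : realType) (W t : nat -> R) (s : seq (R * R)) (B : R) (r : nat) :
  (forall k, W k = xsum s k) -> (forall k, `|W k| <= B) ->
  (forall k, t k = W (2 * k + r)%N) ->
  (exists N : nat, forall k, (N <= k)%N -> t k = t N) \/
  (exists C m : R, 0 < m /\
     (fun k : nat => `|t k - limn t| / (C * m ^+ k)) @ \oo --> (1 : R)).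
Proof.
move=> hW hB ht.
pose s1 := [seq (p.1 * p.2 ^+ r, p.2 ^+ 2) | p <- s].
have h1 : forall k, t k = xsum s1 k.
  move=> k; rewrite ht hW /xsum big_map; apply: eq_bigr => p _ /=.
  by rewrite exprD exprM; ring.
have hpos : all (fun p => 0 <= p.2) s1.
  by apply/allP => p /mapP [q _ ->] /=; exact: sqr_ge0.
have [s2 [hu hnz hp2 hs2]] := normalize hpos.
apply: (@asym_normal R t s2 B) => //.
  by move=> k; rewrite hs2 h1.
by move=> k; rewrite ht.
Qed.

Unset Implicit Arguments. Set Strict Implicit. Set Printing Implicit Defensive.

Theorem lemma7p1 (R : realType) (T : finType) (e : rel T) (u v : T)
  (alpha beta : R)
  (hG : simple_graph e) (hconn : connected_graph e)
  (ha0 : 0 <= alpha) (hab : alpha <= beta) (hb1 : beta <= 1)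
  (hbeta : beta = 1) :
  let W := Wk e u v alpha beta in
  ((exists N : nat, forall k, (N <= k)%N -> W (2 * k)%N = W (2 * N)%N) \/
   (exists c_e lam_e : R,
      (fun k : nat => `|W (2 * k)%N - limn (fun k => W (2 * k)%N)|
                        / (c_e * lam_e ^+ (2 * k))) @ \oo --> (1 : R))) /\
  ((exists N : nat, forall k, (N <= k)%N -> W (2 * k).+1 = W (2 * N).+1) \/
   (exists c_o lam_o : R,
      (fun k : nat => `|W (2 * k).+1 - limn (fun k => W (2 * k).+1)|
                        / (c_o * lam_o ^+ (2 * k).+1)) @ \oo --> (1 : R))).
Proof.
move=> W; subst beta.
have ha : 0 <= alpha <= 1 by rewrite ha0 hab.
have hW : forall k, W k = wasserstein e (walk_dist e alpha u k) (fun y => (y == v)%:R).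
  move=> k; rewrite /W /Wk; congr wasserstein; apply: boolp.funext => y; exact: walk1.
case: (boolp.pselect (forall x, (0 < deg e x)%N)) => hd; last first.
  have [x0 hx0] : exists x0, deg e x0 = 0%N.
    apply: boolp.contrapT => hn; apply: hd => x; rewrite lt0n; apply/eqP => h.
    by apply: hn; exists x.
  have hsing := deg0_single hconn hx0.
  have hW0 : forall k, W k = 0.
    move=> k; rewrite hW.
    have hc : wcost e (walk_dist e alpha u k) v = 0.
      rewrite /wcost big1 // => x _.
      by rewrite (hsing x) (hsing v) gdist_refl mulr0.
    by case: (wass_cases e (walk_dist e alpha u k) v) => ->.
  by split; left; exists 0%N => k _; rewrite !hW0.
have hWc : forall k, W k = wcost e (walk_dist e alpha u k) v.
  by move=> k; rewrite hW wass_eq //; [move=> x; exact: walk_ge0 | exact: walk_sum].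
have [s hs] := repr_walk alpha u v hG hd.
have hB : forall k, `|W k| <= #|T|%:R.
  move=> k; rewrite hWc /wcost.
  have h0 : forall x, 0 <= walk_dist e alpha u k x by move=> x; exact: walk_ge0.
  rewrite ger0_norm; last by apply: sumr_ge0 => x _; rewrite mulr_ge0.
  apply: (@le_trans _ _ (\sum_(x : T) walk_dist e alpha u k x * #|T|%:R)).
    apply: ler_sum => x _; apply: ler_wpM2l => //.
    by rewrite ler_nat gdist_le.
  by rewrite -mulr_suml walk_sum // mul1r.
have hWs : forall k, W k = xsum s k by move=> k; rewrite hWc hs.
split.
- have := @parity R W (fun k => W (2 * k)%N) s _ 0 hWs hB (fun k => congr1 W (esym (addn0 _))).
  case=> [hl|[C [m [hm hc]]]]; [by left | right].
  exists C, (Num.sqrt m).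
  have -> : (fun k : nat => `|W (2 * k)%N - limn (fun k => W (2 * k)%N)| /
      (C * Num.sqrt m ^+ (2 * k))) =
    (fun k : nat => `|W (2 * k)%N - limn (fun k => W (2 * k)%N)| / (C * m ^+ k)).
    by apply: boolp.funext => k; rewrite exprM sqr_sqrtr // ltW.
  exact: hc.
- have := @parity R W (fun k => W (2 * k).+1) s _ 1 hWs hB (fun k => congr1 W (esym (addn1 _))).
  case=> [hl|[C [m [hm hc]]]]; [by left | right].
  exists (C / Num.sqrt m), (Num.sqrt m).
  have hq : Num.sqrt m != 0 by rewrite gt_eqF // sqrtr_gt0.
  have -> : (fun k : nat => `|W (2 * k).+1 - limn (fun k => W (2 * k).+1)| /
      (C / Num.sqrt m * Num.sqrt m ^+ (2 * k).+1)) =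
    (fun k : nat => `|W (2 * k).+1 - limn (fun k => W (2 * k).+1)| / (C * m ^+ k)).
    apply: boolp.funext => k; rewrite exprS exprM sqr_sqrtr ?ltW //.
    by congr (_ / _); field.
  exact: hc.
Qed.
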